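(* Let $f:X\to Y$ be a continuous surjection between compact spaces such that $f$ is light, i.e. every fibre $f^{-1}(y)$, $y\in Y$, is zero-dimensional. Let $A$ be the set of all continuous functions $u:X\to [0,1]$ such that $u[f^{-1}(y)]$ is zero-dimensional for every $y\in Y$. If $Y$ has property $C$, then $A$ is a dense $G_\delta$-subset of $C(X,[0,1])$.
   Context: Compact spaces are Hausdorff. $C(X,[0,1])$ denotes the space of all continuous maps $u:X\to[0,1]$ with the sup-metric $d(u,v)=\sup_{x\in X}|u(x)-v(x)|$. A space $Y$ has property $C$ (is a $C$-space) if for every sequence $\{\alpha_n:n\in\omega\}$ of open covers of $Y$ there is a sequence $\{\mu_n:n\in\omega\}$, where each $\mu_n$ is a family of pairwise disjoint open subsets of $Y$ refining $\alpha_n$, such that $\bigcup_{n\in\omega}\mu_n$ covers $Y$. *)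

(* Defs.v *)
From HB Require Import structures.
From mathcomp Require Import all_boot all_order all_algebra.
From mathcomp Require Import all_classical all_reals all_analysis.
Set Implicit Arguments. Unset Strict Implicit. Unset Printing Implicit Defensive.
Import Order.TTheory GRing.Theory Num.Theory.
Import numFieldNormedType.Exports.
Local Open Scope classical_set_scope.
Local Open Scope ring_scope.

Definition zero_dim {T : topologicalType} (S : set T) : Prop :=
  forall (x : T) (U : set T), S x -> open U -> U x ->
    exists W : set T, W x /\ W `&` S `<=` U /\
      (exists O, open O /\ W `&` S = O `&` S) /\
      (exists C, closed C /\ W `&` S = C `&` S).

Definition open_cover {Y : topologicalType} (a : set (set Y)) : Prop :=
  (forall U, a U -> open U) /\ (forall y : Y, exists2 U, a U & U y).

Definition C_space (Y : topologicalType) : Prop :=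
  forall alpha : nat -> set (set Y), (forall n, open_cover (alpha n)) ->
  exists mu : nat -> set (set Y),
    (forall n U, mu n U -> open U) /\
    (forall n U V, mu n U -> mu n V -> U <> V -> U `&` V = set0) /\
    (forall n U, mu n U -> exists2 V, alpha n V & U `<=` V) /\
    (forall y : Y, exists n, exists2 U, mu n U & U y).

Definition CX01 {X : topologicalType} {R : realType} : set (X -> R) :=
  [set u : X -> R | continuous u /\ forall x, 0 <= u x <= 1].

Definition supdist_lt {X : topologicalType} {R : realType}
  (u v : X -> R) (e : R) : Prop :=
  exists r : R, r < e /\ forall x, `|u x - v x| <= r.

Definition open_in_CX01 {X : topologicalType} {R : realType}
  (G : set (X -> R)) : Prop :=
  forall u, CX01 u -> G u ->
    exists2 e : R, 0 < e & forall v, CX01 v -> supdist_lt u v e -> G v.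

Definition dense_in_CX01 {X : topologicalType} {R : realType}
  (A : set (X -> R)) : Prop :=
  A `<=` CX01 /\
  forall u, CX01 u -> forall e : R, 0 < e -> exists2 v, A v & supdist_lt u v e.

Definition Gdelta_in_CX01 {X : topologicalType} {R : realType}
  (A : set (X -> R)) : Prop :=
  exists G : nat -> set (X -> R), (forall n, open_in_CX01 (G n)) /\
    A = CX01 `&` \bigcap_n G n.

(* Main.v *)
Require Import Defs.
From HB Require Import structures.
From mathcomp Require Import all_boot all_order all_algebra.
From mathcomp Require Import all_classical all_reals all_analysis.
Import Order.TTheory GRing.Theory Num.Theory.
Import numFieldNormedType.Exports.
Local Open Scope classical_set_scope.
Local Open Scope ring_scope.
From mathcomp Require Import ring lra.
Section RealLemmas.
Context {R : realType}.

Lemma zd_of_gaps (S : set R) :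
  (forall a b : R, a < b -> exists t, (a < t < b) /\ ~ S t) -> zero_dim S.
Proof.
move=> gap x U Sx oU Ux.
have /nbhs_ballP [r r0 rU] : nbhs x U by apply: open_nbhs_nbhs.
have [a [/andP [xra ax] nSa]] : exists t, (x - r < t < x) /\ ~ S t.
  by apply: gap; rewrite ltrBlDr ltrDl.
have [b [/andP [xb bxr] nSb]] : exists t, (x < t < x + r) /\ ~ S t.
  by apply: gap; rewrite ltrDl.
exists `]a, b[%classic; split; first by rewrite /= in_itv /= ax xb.
split.
  move=> z [/= + _]; rewrite in_itv /= => /andP [az zb]; apply: rU.
  by rewrite /ball /= ltr_norml; apply/andP; split; lra.
split; first by exists `]a, b[%classic; split => //; exact: interval_open.
exists `[a, b]%classic; split; first exact: interval_closed.
apply/seteqP; split => z [/= + Sz]; rewrite !in_itv /=.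
  by move=> /andP [az zb]; split => //; rewrite !ltW.
move=> /andP [az zb]; split => //; rewrite !lt_neqAle az zb !andbT.
apply/andP; split; apply/negP => /eqP E.
  by apply: nSa; rewrite E.
by apply: nSb; rewrite -E.
Qed.

Lemma gap_seq (s : seq R) (a b : R) : a < b -> exists t, (a < t < b) /\ t \notin s.
Proof.
elim: s a b => [|x s IH] a b ab.
  by exists ((a + b) / 2); split => //; apply/andP; split; lra.
have [xm|xm] := lerP x ((a + b) / 2).
  have [t [/andP [mt tb] ts]] := IH ((a + b) / 2) b ltac:(lra).
  exists t; split; first by apply/andP; split; lra.
  by rewrite in_cons negb_or ts andbT; apply/eqP => E; lra.
have [t [/andP [mt tb] ts]] := IH a ((a + b) / 2) ltac:(lra).
exists t; split; first by apply/andP; split; lra.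
by rewrite in_cons negb_or ts andbT; apply/eqP => E; lra.
Qed.

Lemma zd_of_seq (S : set R) (s : seq R) : (forall t, S t -> t \in s) -> zero_dim S.
Proof.
move=> Ss; apply: zd_of_gaps => a b ab.
have [t [abt ts]] := gap_seq s a b ab; exists t; split => // /Ss; exact/negP.
Qed.

Lemma zd_no_itv (S : set R) (a b : R) : zero_dim S -> a < b ->
  ~ (forall t, a <= t <= b -> S t).
Proof.
move=> zS ab abS.
have Sx : S ((a + b) / 2) by apply: abS; apply/andP; split; lra.
have oI : open `]a, b[%classic by exact: interval_open.
have [Wt [Wx [WSU [ [Op [oOp WOp]] [Cl [cCl WCl]]]]]] :=
  zS ((a + b) / 2) `]a, b[%classic Sx oI ltac:(rewrite /= in_itv /=; apply/andP; split; lra).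
have itvS : `[a, b]%classic `<=` S by move=> t /=; rewrite in_itv /=; exact: abS.
have E1 : `[a, b]%classic `&` Op = `[a, b]%classic `&` Cl.
  apply/seteqP; split => t [tab Ot]; split => //.
    have : (Op `&` S) t by split => //; exact: itvS.
    by rewrite -WOp WCl => -[].
  have : (Cl `&` S) t by split => //; exact: itvS.
  by rewrite -WCl WOp => -[].
have E : `[a, b]%classic `&` Op = `[a, b]%classic.
  apply: segment_connected.
  - exists ((a + b) / 2); split; first by rewrite /= in_itv /=; apply/andP; split; lra.
    have : (Wt `&` S) ((a + b) / 2) by [].
    by rewrite WOp => -[].
  - by exists Op.
  - by exists Cl.
have : (`[a, b]%classic `&` Op) a by rewrite E /= in_itv /= lexx ltW.
move=> [_ Oa]; have : (Wt `&` S) a.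
  by rewrite WOp; split => //; apply: abS; rewrite lexx ltW.
by move/WSU; rewrite /= in_itv /= ltxx.
Qed.
End RealLemmas.
Lemma finite_cover {T : topologicalType} (K : set T) (I : Type) (O : I -> set T) :
  compact K -> (forall i, open (O i)) -> (forall x, K x -> exists i, O i x) ->
  exists s : seq I, forall x, K x -> exists i, List.In i s /\ O i x.
Proof.
move=> /compact_near_coveringP cK oO cov.
pose F : set_system (seq I) := fun Q => exists s0 : seq I,
  forall s, (forall i, List.In i s0 -> List.In i s) -> Q s.
have FF : Filter F.
  constructor.
  - by exists [::].
  - move=> P Q [s1 H1] [s2 H2]; exists (s1 ++ s2) => s Hs; split.
      by apply: H1 => i Hi; apply: Hs; apply: List.in_or_app; left.
    by apply: H2 => i Hi; apply: Hs; apply: List.in_or_app; right.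
  - by move=> P Q PQ [s0 H]; exists s0 => s /H /PQ.
have := cK (seq I) F (fun s x => exists i, List.In i s /\ O i x) FF.
case.
  move=> x Kx; have [i Oix] := cov x Kx.
  exists (O i, [set s | List.In i s]); first split.
  - exact: (@open_nbhs_nbhs _ _ (O i)).
  - by exists [:: i] => s; apply; left.
  by case=> x' s [/= Ox' Is]; exists i.
move=> s0 H; exists s0; exact: H.
Unshelve. all: by end_near. Qed.
Section Main.
Context (R : realType) (X Y : topologicalType) (f : X -> Y).
Hypotheses (cX : compact [set: X]) (hX : hausdorff_space X)
  (cY : compact [set: Y]) (hY : hausdorff_space Y) (fc : continuous f).

Lemma fiber_margin (u : X -> R) (y : Y) (t0 : R) : continuous u ->
  (forall x, f x = y -> u x != t0) ->
  exists2 d : R, 0 < d & \forall y' \near y, forall x, f x = y' -> d <= `|u x - t0|.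
Proof.
move=> uc Hy.
have := (proj1 (compact_near_coveringP _) cX) (Y * R)%type
  (filter_prod (nbhs y) (0^'+))
  (fun i x => f x = i.1 -> i.2 <= `|u x - t0|) _.
case.
  move=> x _; have [fxy|fxy] := eqVneq (f x) y.
    have d0 : 0 < `|u x - t0| by rewrite normr_gt0 subr_eq0 Hy.
    move: d0; move Hd: `|u x - t0| => d d0.
    exists ([set x' | `|u x - u x'| < d / 2], [set i : Y * R | i.2 < d / 2]).
      split.
      - exact: (cvgr_dist_lt u (u x) (uc x) (d / 2) ltac:(lra)).
      - exists (setT, [set e : R | e < d / 2]); first split => /=.
        + exact: filterT.
        + by apply: nbhs_right_lt; lra.
        by case=> ? ? [_ /=].
    case=> x' [i1 i2] [/= H1 H2] _.
    have : `|u x - t0| <= `|u x - u x'| + `|u x' - t0|.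
      by rewrite (le_trans _ (ler_normD _ _)) // addrA subrK.
    rewrite Hd => H; apply/ltW; lra.
  move: hY; rewrite open_hausdorff => /(_ _ _ fxy) [[A B] /= [/set_mem Ax /set_mem By]].
  case=> oA oB /eqP AB0.
  exists (f @^-1` A, [set i : Y * R | B i.1]).
    split.
    - by apply: fc; apply: open_nbhs_nbhs.
    - exists (B, setT); first split => /=.
      + by apply: open_nbhs_nbhs.
      + exact: filterT.
      by case=> ? ? [/= ? _].
  case=> x' [i1 i2] [/= Ax' Bi1] fx'.
  have : (A `&` B) i1 by split => //; rewrite -fx'.
  by rewrite AB0.
move=> [S1 S2] [/= nS1 nS2] sub.
have [d [S2d d0]] := filter_ex (filterI nS2 (nbhs_right_gt 0)).
exists d => //; apply: filterS nS1 => y' S1y' x fx.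
exact: (sub (y', d) (conj S1y' S2d) x I fx).
Qed.


Definition Gset (n : nat) : set (X -> R) := [set u | forall (y : Y) (a : R),
  ~ (forall t, a <= t <= a + (n.+1%:R)^-1 -> exists2 x, f x = y & u x = t)].

Lemma G_margin n (u : X -> R) : continuous u -> Gset n u ->
  exists2 e : R, 0 < e & forall y a, 0 <= a <= 1 ->
    exists t, a <= t <= a + (n.+1%:R)^-1 /\ forall x, f x = y -> e <= `|u x - t|.
Proof.
move=> uc Gu; set L := (n.+1%:R)^-1.
have cK : compact ([set: Y] `*` `[(0:R), 1]%classic).
  by apply: compact_setX => //; exact: segment_compact.
have := (proj1 (compact_near_coveringP _) cK) R (0^'+)
  (fun e p => exists t, p.2 <= t <= p.2 + L /\ forall x, f x = p.1 -> e <= `|u x - t|) _.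
case.
  move=> [y a] _.
  have [t0 [t0I t0n]] : exists t0, a <= t0 <= a + L /\ forall x, f x = y -> u x != t0.
    have := Gu y a; apply: contra_notP => H t tI; apply: contrapT => nex.
    apply: H; exists t; split => // x fx; apply/eqP => E; apply: nex; by exists x.
  have [d d0 nQ] := @fiber_margin u y t0 uc t0n.
  exists ([set p : Y * R | (fun y' => forall x, f x = y' -> d <= `|u x - t0|) p.1 /\
                           `|a - p.2| < d / 2], [set e : R | e < d / 2]).
    split => /=.
    - exists ((fun y' => forall x, f x = y' -> d <= `|u x - t0|), [set r : R | `|a - r| < d / 2]).
        split => //=.
        exact: (cvgr_dist_lt id a (@cvg_id _ _) (d / 2) ltac:(lra)).
      by case=> ? ? [/= ? ?].
    - by apply: nbhs_right_lt; lra.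
  case=> [[y' a'] e] [/= [Qy' aa'] ed].
  exists (t0 + (a' - a)); split.
    by move: t0I => /andP [? ?]; apply/andP; split; lra.
  move=> x fx; have := Qy' x fx.
  have : `|u x - t0| <= `|u x - (t0 + (a' - a))| + `|a - a'|.
    have -> : u x - t0 = (u x - (t0 + (a' - a))) + (a' - a) by ring.
    by rewrite [`|a - a'|]distrC; exact: ler_normD.
  by move=> H1 H2; lra.
move=> r /= r0 H.
have e0 : 0 < r / 2 by lra.
have := H (r / 2) ltac:(rewrite /ball /= sub0r normrN gtr0_norm //; lra) e0.
move=> HK; exists (r / 2) => // y a a01.
have := HK (y, a) ltac:(split => //=; rewrite in_itv /=).
by [].
Qed.


Lemma G_open n : open_in_CX01 (Gset n).
Proof.
move=> u [uc u01] Gu; have [e e0 He] := @G_margin n u uc Gu.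
exists e => // v [vc v01] [r [re vr]] y a H.
have L0 : 0 <= (n.+1%:R : R)^-1 by rewrite invr_ge0 ler0n.
have a01 : 0 <= a <= 1.
  have [x _ vxa] := H a ltac:(by rewrite lexx /= lerDl).
  by rewrite -vxa; exact: v01.
have [t [tI Ht]] := He y a a01.
have [x fx vxt] := H t tI.
have := Ht x fx; rewrite -vxt; have := vr x; lra.
Qed.

Lemma A_eq : [set u : X -> R | CX01 u /\ forall y : Y, zero_dim (u @` (f @^-1` [set y]))]
  = CX01 `&` \bigcap_n Gset n.
Proof.
apply/seteqP; split.
  move=> u [Cu zd]; split => // n _ y a H.
  have L0 : 0 < (n.+1%:R : R)^-1 by rewrite invr_gt0 ltr0n.
  apply: (@zd_no_itv R _ a (a + (n.+1%:R)^-1) (zd y)); first by rewrite ltrDl.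
  by move=> t /H [x fx uxt]; exists x.
move=> u [Cu GU]; split => // y; apply: zd_of_gaps => a b ab.
set n := Num.Def.trunc ((b - a)^-1).
have ba0 : 0 < b - a by lra.
have Lba : (n.+1%:R : R)^-1 < b - a.
  rewrite invf_plt ?posrE ?ltr0n //; exact: (truncnS_gt (b - a)^-1).
have L0 : 0 < (n.+1%:R : R)^-1 by rewrite invr_gt0 ltr0n.
move: Lba L0; move HL: (n.+1%:R : R)^-1 => L Lba L0.
have := GU n I y (a + (b - a - L) / 2).
move=> /existsNP [t /not_implyP [tI nt]]; rewrite HL in tI.
exists t; split.
  by move: tI => /andP [? ?]; apply/andP; split; lra.
by case=> x fx uxt; apply: nt; exists x.
Qed.

End Main.
Lemma cont_near_eq {T : topologicalType} {R : realType} (h1 h2 : T -> R) x :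
  (\forall z \near x, h1 z = h2 z) -> {for x, continuous h1} -> {for x, continuous h2}.
Proof.
move=> H c; have e : h2 x = h1 x by rewrite (nbhs_singleton H).
apply: (@cvg_trans _ (h1 @ x)); first exact: near_eq_cvg.
by rewrite e.
Qed.

Section Dens.
Context (R : realType) (X Y : topologicalType) (f : X -> Y).
Hypotheses (cX : compact [set: X]) (hX : hausdorff_space X)
  (cY : compact [set: Y]) (hY : hausdorff_space Y) (fc : continuous f).
Context (u : X -> R) (uc : continuous u) (u01 : forall x, 0 <= u x <= 1)
  (d : R) (d0 : 0 < d).

Definition Good (K : set X) := exists (Op : set X) (g : X -> R),
  [/\ open Op, K `<=` Op, (forall x, Op x -> {for x, continuous g}),
      (forall x, 0 <= g x <= 1) & (forall x, Op x -> `|g x - u x| <= d)] /\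
      exists s : seq R, forall x, Op x -> g x \in s.

Lemma Good_sub K K' : K' `<=` K -> Good K -> Good K'.
Proof.
move=> KK [Op [g [ [oO KO gc g01 gu] [s gs]]]].
exists Op, g; split; last by exists s.
split => //; exact: subset_trans KO.
Qed.

Lemma Good0 : Good set0.
Proof.
exists set0, (fun=> 0); split; last by exists [::].
split => //; first exact: open0.
by move=> x; rewrite lexx ler01.
Qed.

Lemma Good_const x0 (W K : set X) : open W -> K `<=` W ->
  (forall x, W x -> `|u x0 - u x| < d) -> Good K.
Proof.
move=> oW KW Wd; exists W, (fun=> u x0); split; first split => //.
- by move=> x _; exact: cvg_cst.
- by move=> x /Wd; rewrite distrC => /ltW.
- by exists [:: u x0] => x _; rewrite mem_seq1.
Qed.

Lemma Good_union K1 K2 : closed K1 -> closed K2 -> K1 `&` K2 = set0 ->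
  Good K1 -> Good K2 -> Good (K1 `|` K2).
Proof.
move=> cK1 cK2 K12 [Oa [g1 [ [oO1 KO1 g1c g101 g1u] [s1 gs1]]]]
  [Ob [g2 [ [oO2 KO2 g2c g201 g2u] [s2 gs2]]]].
have nX : normal_space X by exact: compact_normal.
have [U1 [U2 [oU1 oU2 KU1 KU2 U12]]] := (proj1 (@normal_openP R X) nX) K1 K2 cK1 cK2 K12.
pose g x := if pselect ((Oa `&` U1) x) then g1 x else g2 x.
have nU : forall x, U2 x -> ~ U1 x.
  by move=> x U2x U1x; have : (U1 `&` U2) x by []; rewrite U12.
exists ((Oa `&` U1) `|` (Ob `&` U2)), g; split; first split.
- by apply: openU; apply: openI.
- by move=> x [K1x|K2x]; [left; split; [exact: KO1|exact: KU1] | right; split; [exact: KO2|exact: KU2]].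
- move=> x [OUx|OUx].
    apply: (@cont_near_eq _ _ g1); last exact: g1c (proj1 OUx).
    have : nbhs x (Oa `&` U1) by apply: open_nbhs_nbhs; split => //; exact: openI.
    by apply: filterS => z OUz; rewrite /g; case: pselect.
  apply: (@cont_near_eq _ _ g2); last exact: g2c (proj1 OUx).
  have : nbhs x U2 by apply: open_nbhs_nbhs; split => //; case: OUx.
  by apply: filterS => z U2z; rewrite /g; case: pselect => [[Oz U1z]|//]; case: (nU _ U2z U1z).
- by move=> x; rewrite /g; case: pselect => H; [exact: g101 | exact: g201].
- move=> x [ [Oax U1x]|[Obx U2x] ]; rewrite /g; case: pselect => [ [Oz U1z]|nOU].
  + exact: g1u.
  + by case: nOU.
  + by case: (nU _ U2x U1z).
  + exact: g2u.
- exists (s1 ++ s2) => x [ [Oax U1x]|[Obx U2x] ]; rewrite /g mem_cat; case: pselect => [ [Oz U1z]|nOU].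
  + by rewrite gs1.
  + by case: nOU.
  + by case: (nU _ U2x U1z).
  + by rewrite gs2 ?orbT.
Qed.


Lemma fiber_closed y : closed (f @^-1` [set y]).
Proof.
apply: preimage_closed; first by move=> x _; exact: fc.
exact: (accessible_closed_set1 (hausdorff_accessible hY)).
Qed.

Lemma Good_fiber y : zero_dim (f @^-1` [set y]) -> Good (f @^-1` [set y]).
Proof.
set Fy := f @^-1` [set y] => zd.
have cFy : compact Fy by apply: (subclosed_compact (fiber_closed y) cX).
pose U x := ball (u x) d \o u.
have oU x : open (U x) by apply: open_comp; [move=> z _; exact: uc | exact: ball_open].
have : forall x, exists OC : set X * set X, open OC.1 /\ (~ Fy x -> OC.1 = set0) /\
    (Fy x -> [/\ closed OC.2, OC.1 x, OC.1 `&` Fy `<=` U x & OC.1 `&` Fy = OC.2 `&` Fy]).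
  move=> x; have [Fx|nFx] := pselect (Fy x); last first.
    by exists (set0, set0); split => //; exact: open0.
  have Ux : U x x by rewrite /U /=; exact: ballxx.
  have [W [Wx [WU [ [Op [oOp WOp]] [Cl [cCl WCl]]]]]] := zd x (U x) Fx (oU x) Ux.
  exists (Op, Cl); split => //; split => // _; split => //=.
  - by have : (W `&` Fy) x by []; rewrite WOp => -[].
  - by rewrite -WOp.
  - by rewrite -WOp WCl.
move=> /choice [OC HOC].
pose Op i := (OC i).1; pose Cl i := (OC i).2.
have covF : forall x, Fy x -> exists i, Op i x.
  by move=> x Fx; exists x; case: ((HOC x).2.2 Fx).
have [s Hs] := @finite_cover _ Fy X Op cFy (fun i => (HOC i).1) covF.
suff [K [cK GK KF covK]] : exists K, [/\ closed K, Good K, K `<=` Fy &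
    forall x, Fy x -> (exists i, List.In i s /\ Op i x) -> K x].
  by apply: (@Good_sub K _ _ GK) => x Fx; apply: covK => //; exact: Hs.
elim: s {Hs} => [|i s [K [cK GK KF covK]]].
  exists set0; split => //; first exact: closed0.
    exact: Good0.
  by move=> x _ [? [] ].
have [Fi|nFi] := pselect (Fy i); last first.
  exists K; split => // x Fx [j [[ji|js] Ojx]]; last by apply: covK => //; exists j.
  by move: Ojx; rewrite -ji /Op ((HOC i).2.1 nFi).
have [cCi Opii OiU OiC] := (HOC i).2.2 Fi.
have oOi : open (Op i) := (HOC i).1.
have K1C : Cl i `&` Fy `<=` Op i by rewrite -OiC => x [].
exists ((Cl i `&` Fy) `|` (K `&` ~` Op i)); split.
- apply: closedU; first exact: closedI (fiber_closed y).
  by apply: closedI => //; exact: open_closedC.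
- apply: Good_union.
  + exact: closedI (fiber_closed y).
  + by apply: closedI => //; exact: open_closedC.
  + by apply/seteqP; split => x // [/K1C Oix [_ nOix]].
  + apply: (@Good_const i (Op i `&` U i)); first exact: openI.
      by move=> x CFx; split; [exact: K1C|apply: OiU; split; [exact: K1C|case: CFx]].
    by move=> x [_ Ux].
  + by apply: (@Good_sub K _ _ GK) => x [].
- by move=> x [[_ Fx]|[/KF Fx _]].
- move=> x Fx [j [[ji|js] Ojx]].
    by left; rewrite -OiC; split => //; rewrite -ji in Ojx.
  have [Oix|nOix] := pselect (Op i x).
    by left; rewrite -OiC.
  by right; split => //; apply: covK => //; exists j.
Qed.


Lemma local_fun y : zero_dim (f @^-1` [set y]) -> exists V : set Y,
  [/\ open V, V y & exists g : X -> R,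
    [/\ (forall x, V (f x) -> {for x, continuous g}), (forall x, 0 <= g x <= 1),
        (forall x, V (f x) -> `|g x - u x| <= d) &
        exists s : seq R, forall x, V (f x) -> g x \in s]].
Proof.
move=> /Good_fiber [Op [g [ [oOp FO gc g01 gu] [s gs]]]].
have cC : compact (f @` (~` Op)).
  apply: continuous_compact; first exact: continuous_subspaceT.
  by apply: (subclosed_compact _ cX) => //; exact: open_closedC.
have VO : forall x, (~` (f @` (~` Op))) (f x) -> Op x.
  by move=> x nfx; apply: contrapT => nOx; apply: nfx; exists x.
exists (~` (f @` (~` Op))); split.
- by apply: closed_openC; exact: compact_closed.
- by move=> [x nOx fxy]; apply: nOx; apply: FO.
exists g; split.
- by move=> x /VO; exact: gc.
- exact: g01.
- by move=> x /VO; exact: gu.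
- by exists s => x /VO; exact: gs.
Qed.

Lemma bump y (V : set Y) : open V -> V y -> exists (N : set Y) (l : Y -> R) (K : set Y),
  [/\ open N, N y, continuous l, (forall z, 0 <= l z <= 1) & (forall z, N z -> l z = 1)] /\
  [/\ closed K, K `<=` V & forall z, ~ K z -> l z = 0].
Proof.
move=> oV Vy.
have nY : normal_space Y by exact: compact_normal.
have cy : closed [set y] by exact: (accessible_closed_set1 (hausdorff_accessible hY)).
have [U1 [V1 [oU1 oV1 yU1 nVV1 UV1]]] := (proj1 (@normal_openP R Y) nY) [set y] (~` V)
  cy (open_closedC oV) ltac:(by apply/seteqP; split => z // [-> /(_ Vy)]).
have [P2 [Q2 [oP2 oQ2 yP2 nUQ2 PQ2]]] := (proj1 (@normal_openP R Y) nY) [set y] (~` U1)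
  cy (open_closedC oU1) ltac:(by apply/seteqP; split => z // [-> /(_ (yU1 y erefl))]).
have sep : uniform_separator (~` U1) (~` Q2).
  apply: (proj1 (@normal_separatorP R Y) nY).
  - exact: open_closedC.
  - exact: open_closedC.
  - by apply/seteqP; split => z // [/nUQ2 ? []].
have [l [lc lr l0 l1]] := (proj1 (@uniform_separatorP Y R _ _) sep).
exists P2, l, (~` V1); split; split.
- exact: oP2.
- exact: yP2.
- exact: lc.
- by move=> z; have : `[0, 1]%classic (l z) by apply: lr; exists z.
- move=> z P2z; apply: l1; exists z => //.
  by move=> Q2z; have : (P2 `&` Q2) z by []; rewrite PQ2.
- exact: open_closedC.
- by move=> z nV1z; apply: contrapT => nVz; apply: nV1z; exact: nVV1.
- move=> z /contrapT V1z; apply: l0; exists z => // U1z.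
  by have : (U1 `&` V1) z by []; rewrite UV1.
Qed.


Lemma convex_bound (l a b : R) : 0 <= l <= 1 -> 0 <= a <= 1 -> 0 <= b <= 1 ->
  0 <= l * a + (1 - l) * b <= 1.
Proof.
move=> /andP [l0 l1] /andP [a0 a1] /andP [b0 b1].
have h1 : 0 <= l * a by rewrite mulr_ge0.
have h2 : 0 <= (1 - l) * b by rewrite mulr_ge0 // subr_ge0.
have h3 : 0 <= l * (1 - a) by rewrite mulr_ge0 // subr_ge0.
have h4 : 0 <= (1 - l) * (1 - b) by rewrite mulr_ge0 // subr_ge0.
apply/andP; split; nra.
Qed.

Lemma convex_close (l a b c : R) : 0 <= l <= 1 -> `|a - c| <= d -> `|b - c| <= d ->
  `|l * a + (1 - l) * b - c| <= d.
Proof.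
move=> /andP [l0 l1] ha hb.
have -> : l * a + (1 - l) * b - c = l * (a - c) + (1 - l) * (b - c) by ring.
apply: (le_trans (ler_normD _ _)); rewrite !normrM (ger0_norm l0) (@ger0_norm _ (1 - l)) ?subr_ge0 //.
have h1 : l * `|a - c| <= l * d by rewrite ler_wpM2l.
have h2 : (1 - l) * `|b - c| <= (1 - l) * d by rewrite ler_wpM2l // subr_ge0.
have -> : d = l * d + (1 - l) * d by ring.
exact: lerD.
Qed.

Lemma stage (w : X -> R) (V : set Y) (g : X -> R) (l : Y -> R) (K : set Y) :
  continuous w -> (forall x, 0 <= w x <= 1) -> (forall x, `|w x - u x| <= d) ->
  (forall x, V (f x) -> {for x, continuous g}) -> (forall x, 0 <= g x <= 1) ->
  (forall x, V (f x) -> `|g x - u x| <= d) ->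
  (exists s : seq R, forall x, V (f x) -> g x \in s) ->
  continuous l -> (forall z, 0 <= l z <= 1) ->
  closed K -> K `<=` V -> (forall z, ~ K z -> l z = 0) ->
  exists w' : X -> R, [/\ continuous w', (forall x, 0 <= w' x <= 1),
    (forall x, `|w' x - u x| <= d),
    (forall y', (exists s : seq R, forall x, f x = y' -> w x \in s) ->
       exists s : seq R, forall x, f x = y' -> w' x \in s) &
    (forall y', l y' = 1 -> exists s : seq R, forall x, f x = y' -> w' x \in s)].
Proof.
move=> wc w01 wu gc g01 gu [sg gs] lc l01 cK KV lK.
have lV z : l z != 0 -> V z.
  by move=> lz; apply: KV; apply: contrapT => /lK; apply/eqP.
have w'E x : l (f x) = 0 -> l (f x) * g x + (1 - l (f x)) * w x = w x.
  by move=> ->; ring.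
exists (fun x => l (f x) * g x + (1 - l (f x)) * w x); split.
- move=> x; have [Vfx|nVfx] := pselect (V (f x)).
    have lfc : {for x, continuous (l \o f)}.
      by apply: continuous_comp; [exact: fc | exact: lc].
    apply: cvgD; first by apply: cvgM; [exact: lfc | exact: gc].
    apply: cvgM; last exact: wc.
    by apply: cvgB; [exact: cvg_cst | exact: lfc].
  apply: (@cont_near_eq _ _ w); last exact: wc.
  have nK : ~ K (f x) by move/KV.
  have : nbhs x (f @^-1` (~` K)).
    by apply: fc; apply: open_nbhs_nbhs; split => //; exact: closed_openC.
  by apply: filterS => z /lK /w'E ->.
- by move=> x; apply: convex_bound.
- move=> x; have [l0|l0] := eqVneq (l (f x)) 0.
    by rewrite w'E.
  by apply: convex_close => //; apply: gu; exact: lV.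
- move=> y' [s ws]; have [l0|l0] := eqVneq (l y') 0.
    by exists s => x fx; rewrite w'E ?fx //; exact: ws.
  exists [seq l y' * a + (1 - l y') * b | a <- sg, b <- s] => x fx.
  rewrite fx; apply: allpairs_f; last exact: ws.
  by apply: gs; rewrite fx; exact: lV.
- move=> y' l1; exists sg => x fx; rewrite fx l1 subrr mul0r addr0 mul1r.
  by apply: gs; rewrite fx; apply: lV; rewrite l1 oner_neq0.
Qed.


Lemma dense_step : (forall y, zero_dim (f @^-1` [set y])) ->
  exists w : X -> R, [/\ continuous w, (forall x, 0 <= w x <= 1),
    (forall x, `|w x - u x| <= d) &
    forall y, exists s : seq R, forall x, f x = y -> w x \in s].
Proof.
move=> fl.
have H : forall y, exists N : set Y, open N /\ N y /\
    exists (V : set Y) (g : X -> R) (l : Y -> R) (K : set Y),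
    [/\ (forall x, V (f x) -> {for x, continuous g}), (forall x, 0 <= g x <= 1),
        (forall x, V (f x) -> `|g x - u x| <= d) &
        exists s : seq R, forall x, V (f x) -> g x \in s] /\
    [/\ continuous l, (forall z, 0 <= l z <= 1), (forall z, N z -> l z = 1),
        closed K & K `<=` V /\ forall z, ~ K z -> l z = 0].
  move=> y; have [V [oV Vy [g gP]]] := @local_fun y (fl y).
  have [N [l [K [ [oN Ny lc l01 lN] [cK KV lK]]]]] := @bump y V oV Vy.
  by exists N; split => //; split => //; exists V, g, l, K; split.
have [Nf HN] := choice H.
have [s Hs] := @finite_cover _ [set: Y] Y Nf cY (fun i => (HN i).1)
  (fun y _ => ex_intro _ y (HN y).2.1).
suff [w [wc w01 wu wf]] : exists w : X -> R, [/\ continuous w, (forall x, 0 <= w x <= 1),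
    (forall x, `|w x - u x| <= d) &
    forall y', (exists i, List.In i s /\ Nf i y') ->
      exists s : seq R, forall x, f x = y' -> w x \in s].
  by exists w; split => // y; apply: wf; exact: Hs.
elim: s {Hs} => [|i s [w [wc w01 wu wf]]].
  exists u; split => //; first by move=> x; rewrite subrr normr0 ltW.
  by move=> y' [? [] ].
have [_ [_ [V [g [l [K [ [gc g01 gu gs] [lc l01 lN cK [KV lK]]]]]]]]] := HN i.
have [w' [w'c w'01 w'u w'f w'l]] := @stage w V g l K wc w01 wu gc g01 gu gs lc l01 cK KV lK.
exists w'; split => // y' [j [[ji|js] Njy]].
  by apply: w'l; apply: lN; rewrite ji.
by apply: w'f; apply: wf; exists j.
Qed.

End Dens.
Theorem theorem1 (R : realType) (X Y : topologicalType) (f : X -> Y) :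
  compact [set: X] -> hausdorff_space X ->
  compact [set: Y] -> hausdorff_space Y ->
  continuous f -> (forall y : Y, exists x : X, f x = y) ->
  (forall y : Y, zero_dim (f @^-1` [set y])) ->
  C_space Y ->
  let A : set (X -> R) :=
    [set u | CX01 u /\ forall y : Y, zero_dim (u @` (f @^-1` [set y]))] in
  dense_in_CX01 A /\ Gdelta_in_CX01 A.
Proof.
move=> cX hX cY hY fc _ fl _ A.
split.
- split; first by move=> u [].
  move=> u [uc u01] e e0.
  have e20 : 0 < e / 2 by lra.
  have [w [wc w01 wu wf]] := @dense_step R X Y f cX hX cY hY fc u uc u01 (e / 2) e20 fl.
  exists w.
    split; first by split.
    move=> y; have [s Hs] := wf y; apply: (@zd_of_seq R _ s) => t [x fx <-].
    exact: Hs.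
  exists (e / 2); split; first lra.
  by move=> x; rewrite distrC; exact: wu.
- exists (Gset R X Y f); split; first by move=> n; exact: G_open.
  by rewrite /A A_eq.
Qed.
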